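(* Let $I:(0,1)\to(0,1)$ be an increasing bijection satisfying $I(2t)\approx I(t)$ for $t\in(0,\frac12)$, and let $S$ be a sublinear operator defined on $m_I$ (with values in measurable functions on $(0,1)$). If $S$ is bounded on $L^\infty$ and on $m_I$, then $$(Sf)^*(t)\lesssim (S_If)(t),\quad t\in(0,1),$$ for every nonnegative $f\in m_I$. If, in addition, $\int_0^t\frac{ds}{I(s)}\lesssim\frac{t}{I(t)}$ for $t\in(0,1)$, then $$(Sf)^{**}(t)\lesssim(S_If)(t)\quad\text{and}\quad (S_If)^{**}(t)\lesssim(S_If)(t),\quad t\in(0,1),$$ for every nonnegative $f\in m_I$. In particular, for an r.i. space $X\subset m_I$ we have $X\in\mathrm{Int}(L^\infty,m_I)$ whenever $S_I$ is bounded on $X$.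
   Context: $f^*$ is the nonincreasing rearrangement on $(0,1)$, $f^{**}(t)=\frac1t\int_0^tf^*$. $\|f\|_{m_I}=\sup_{0<t<1}I(t)f^*(t)$, $m_I$ the functions with finite quasinorm. $S_If(t)=\frac1{I(t)}\sup_{0<s\le t}I(s)f^*(s)$ (which is $\equiv\infty$ if $f\notin m_I$). An operator is bounded on a (quasi-)normed space $X$ if $\|Tf\|_X\lesssim\|f\|_X$. An r.i. space is a rearrangement-invariant Banach function space on $(0,1)$. $X\in\mathrm{Int}(L^\infty,m_I)$ means $L^\infty\subset X\subset m_I$ and every linear operator bounded on both $L^\infty$ and $m_I$ is bounded on $X$. $\lesssim$, $\approx$ denote inequalities up to constants independent of $f$ and $t$. *)

(* Defs.v *)
From mathcomp Require Import all_boot all_order all_algebra.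
From mathcomp Require Import all_classical all_reals all_analysis.
Import Order.TTheory GRing.Theory Num.Theory.
Import numFieldNormedType.Exports.

Set Implicit Arguments.
Unset Strict Implicit.
Unset Printing Implicit Defensive.

Local Open Scope classical_set_scope.
Local Open Scope ring_scope.

Section RearrDefs.
Variable R : realType.

Definition U01 : set R := `]0, 1[%classic.
Definition leb := (@lebesgue_measure R).
Definition Ioo0 (t : R) : set R := `]0, t[%classic.
Definition Ioc0 (t : R) : set R := `]0, t]%classic.

Definition edistrib (f : R -> \bar R) (l : R) : \bar R :=
  leb (U01 `&` [set x | (l%:E < `|f x|)%E]).

Definition erearr (f : R -> \bar R) (t : R) : \bar R :=
  ereal_inf (EFin @` [set l : R | 0 <= l /\ (edistrib f l <= t%:E)%E]).

Definition rearr (f : R -> R) (t : R) : \bar R := erearr (EFin \o f) t.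

Definition erearr2 (f : R -> \bar R) (t : R) : \bar R :=
  ((t^-1)%:E * \int[leb]_(s in Ioo0 t) erearr f s)%E.

Definition rearr2 (f : R -> R) (t : R) : \bar R := erearr2 (EFin \o f) t.

(* L^infty on (0,1): ||f||_oo = f^*(0) = ess sup |f| *)
Definition Linf_norm (f : R -> R) : \bar R := rearr f 0.
Definition in_Linf (f : R -> R) : Prop :=
  measurable_fun U01 f /\ (Linf_norm f < +oo)%E.

Definition mI_norm (I : R -> R) (f : R -> R) : \bar R :=
  ereal_sup [set ((I t)%:E * rearr f t)%E | t in U01].
Definition in_mI (I : R -> R) (f : R -> R) : Prop :=
  measurable_fun U01 f /\ (mI_norm I f < +oo)%E.

Definition SI (I : R -> R) (f : R -> R) (t : R) : \bar R :=
  (((I t)^-1)%:E * ereal_sup [set ((I s)%:E * rearr f s)%E | s in Ioc0 t])%E.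

Definition sublinear_on_mI (I : R -> R) (S : (R -> R) -> (R -> R)) : Prop :=
  (forall f, in_mI I f -> measurable_fun U01 (S f)) /\
  (forall f g, in_mI I f -> in_mI I g ->
     {ae leb, forall x, U01 x -> `|S (fun y => f y + g y) x| <= `|S f x| + `|S g x| }) /\
  (forall (a : R) f, in_mI I f ->
     {ae leb, forall x, U01 x -> `|S (fun y => a * f y) x| = `|a| * `|S f x| }).

Definition linear_on_mI (I : R -> R) (T : (R -> R) -> (R -> R)) : Prop :=
  (forall f, in_mI I f -> measurable_fun U01 (T f)) /\
  (forall (a b : R) f g, in_mI I f -> in_mI I g ->
     {ae leb, forall x, U01 x ->
        T (fun y => a * f y + b * g y) x = a * T f x + b * T g x }).

Definition bounded_Linf (T : (R -> R) -> (R -> R)) : Prop :=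
  exists C : R, 0 < C /\ forall f, in_Linf f ->
    in_Linf (T f) /\ (Linf_norm (T f) <= C%:E * Linf_norm f)%E.

Definition bounded_mI (I : R -> R) (T : (R -> R) -> (R -> R)) : Prop :=
  exists C : R, 0 < C /\ forall f, in_mI I f ->
    in_mI I (T f) /\ (mI_norm I (T f) <= C%:E * mI_norm I f)%E.

Definition nonneg01 (f : R -> R) : Prop := forall x, U01 x -> 0 <= f x.

(* rearrangement-invariant Banach function space on (0,1) (Luxemburg axioms);
   rho is the function norm acting on nonnegative measurable functions *)
Record ri_space := RIspace {
  rho : (R -> R) -> \bar R;
  rho_ge0 : forall f, (0 <= rho f)%E;
  rho_eq0 : forall f : R -> R, measurable_fun U01 f -> nonneg01 f ->
     (rho f = 0%E <-> {ae leb, forall x, U01 x -> f x = 0});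
  rhoZ : forall (a : R) (f : R -> R), 0 <= a -> measurable_fun U01 f -> nonneg01 f ->
     rho (fun x => a * f x) = (a%:E * rho f)%E;
  rhoD : forall f g : R -> R, measurable_fun U01 f -> nonneg01 f ->
     measurable_fun U01 g -> nonneg01 g ->
     (rho (fun x => (f x + g x)%R) <= rho f + rho g)%E;
  rho_mono : forall f g : R -> R, measurable_fun U01 f -> nonneg01 f ->
     measurable_fun U01 g -> nonneg01 g ->
     {ae leb, forall x, U01 x -> g x <= f x} -> (rho g <= rho f)%E;
  rho_fatou : forall (fn : nat -> R -> R) (f : R -> R),
     (forall n, measurable_fun U01 (fn n)) -> (forall n, nonneg01 (fn n)) ->
     measurable_fun U01 f ->
     (forall x, U01 x -> forall n m, (n <= m)%N -> fn n x <= fn m x) ->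
     (forall x, U01 x -> (fun n => fn n x) @ \oo --> f x) ->
     rho f = ereal_sup (range (fun n => rho (fn n)));
  rho_indic : forall E : set R, measurable E -> E `<=` U01 ->
     (rho (\1_E) < +oo)%E;
  rho_int : forall E : set R, measurable E -> E `<=` U01 ->
     exists C : R, forall f : R -> R, measurable_fun U01 f -> nonneg01 f ->
       (\int[leb]_(x in E) (f x)%:E <= C%:E * rho f)%E;
  rho_ri : forall f g : R -> R, measurable_fun U01 f -> nonneg01 f ->
     measurable_fun U01 g -> nonneg01 g ->
     (forall t, rearr f t = rearr g t) -> rho f = rho g
}.

Definition normX (X : ri_space) (f : R -> R) : \bar R :=
  rho X (fun x => `|f x|).
Definition in_X (X : ri_space) (f : R -> R) : Prop :=
  measurable_fun U01 f /\ (normX X f < +oo)%E.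

Definition bounded_X (X : ri_space) (T : (R -> R) -> (R -> R)) : Prop :=
  exists C : R, 0 < C /\ forall f, in_X X f ->
    in_X X (T f) /\ (normX X (T f) <= C%:E * normX X f)%E.

(* S_I (made real-valued; it is finite on (0,1) for f in m_I) bounded on X *)
Definition SI_bounded_X (I : R -> R) (X : ri_space) : Prop :=
  exists C : R, 0 < C /\ forall f, in_X X f ->
    in_X X (fun t => fine (SI I f t)) /\
    (normX X (fun t => fine (SI I f t)) <= C%:E * normX X f)%E.

Definition Int_Linf_mI (I : R -> R) (X : ri_space) : Prop :=
  (forall f, in_Linf f -> in_X X f) /\
  (forall f, in_X X f -> in_mI I f) /\
  (forall T, linear_on_mI I T -> bounded_Linf T -> bounded_mI I T ->
     bounded_X X T).

Definition incr_bij01 (I : R -> R) : Prop :=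
  (forall t, U01 t -> U01 (I t)) /\
  (forall s t, U01 s -> U01 t -> s < t -> I s < I t) /\
  (forall y, U01 y -> exists2 t, U01 t & I t = y).

Definition doubling (I : R -> R) : Prop :=
  exists c C : R, 0 < c /\ 0 < C /\
    forall t, 0 < t -> t < 2^-1 -> c * I t <= I (2 * t) /\ I (2 * t) <= C * I t.

Definition int_cond (I : R -> R) : Prop :=
  exists C : R, 0 < C /\ forall t, U01 t ->
    (\int[leb]_(s in Ioo0 t) ((I s)^-1)%:E <= (C * t / I t)%:E)%E.

End RearrDefs.

(* Main.v *)
Require Import Defs.
From mathcomp Require Import all_boot all_order all_algebra.
From mathcomp Require Import all_classical all_reals all_analysis.
From mathcomp Require Import ring lra.
From mathcomp Require Import measurable_realfun.
Import Order.TTheory GRing.Theory Num.Theory.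
Import numFieldNormedType.Exports.
Local Open Scope classical_set_scope.
Local Open Scope ring_scope.

Lemma clamp_facts (R : realFieldType) (a c : R) : 0 <= c ->
  [/\ `|a - Num.max (- c) (Num.min a c)| <= `|a|,
      (`|a| <= c -> a - Num.max (- c) (Num.min a c) = 0) &
      `|Num.max (- c) (Num.min a c)| <= c].
Proof.
move=> c0.
have [ac|ac] := leP a c.
  have [ac'|ac'] := leP (- c) a.
    rewrite subrr normr0 normr_ge0; split => //.
    by rewrite ler_norml ac' ac.
  split.
  - rewrite (ltr0_norm (lt_le_trans ac' _)); last by rewrite oppr_le0.
    rewrite ler_norml; apply/andP; split; lra.
  - by rewrite ler_norml => /andP[h _]; lra.
  - by rewrite normrN ger0_norm.
have [cc|cc] := leP (- c) c; last by lra.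
split.
- rewrite (gtr0_norm (le_lt_trans c0 ac)) ger0_norm; lra.
- by rewrite ler_norml => /andP[_ h]; lra.
- by rewrite ger0_norm.
Qed.


Section Aux.
Variable R : realType.
Local Open Scope ereal_scope.
Implicit Types (g h : R -> \bar R).

Lemma leb_mono (A B : set R) : A `<=` B -> @leb R A <= @leb R B.
Proof.
move=> AB. rewrite /leb /lebesgue_measure /lebesgue_stieltjes_measure /measure_extension.
exact: le_outer_measure.
Qed.

Lemma lebU2 (A B : set R) : @leb R (A `|` B) <= @leb R A + @leb R B.
Proof.
rewrite /leb /lebesgue_measure /lebesgue_stieltjes_measure /measure_extension.
exact: outer_measureU2.
Qed.

Lemma leb_ge0 (A : set R) : 0 <= @leb R A.
Proof.
rewrite /leb /lebesgue_measure /lebesgue_stieltjes_measure /measure_extension.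
exact: outer_measure_ge0.
Qed.

Lemma erearr_ge0 g t : 0 <= erearr g t.
Proof. by apply: le_ereal_inf_tmp => _ [l [l0 _] <-]; rewrite lee_fin. Qed.

Lemma erearr_le_dist g h (K : R) t : (0 <= K)%R ->
  (forall l, (0 <= l)%R -> edistrib g (l + K) <= edistrib h l) ->
  erearr g t <= K%:E + erearr h t.
Proof.
move=> K0 H.
rewrite addeC -leeBlDr //.
apply: le_ereal_inf_tmp => _ [l [l0 hl] <-].
rewrite leeBlDr // -EFinD.
apply: ereal_inf_lbound; exists (l + K)%R => //.
split; [exact: addr_ge0 | exact: le_trans (H _ l0) hl].
Qed.

Lemma dist_ae g h (K : R) :
  {ae @leb R, forall x, U01 x -> `|g x| <= K%:E + `|h x|} ->
  forall l, edistrib g (l + K) <= edistrib h l.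
Proof.
move=> [N [mN N0 sub]] l.
rewrite /edistrib.
have H1 : @leb R (@U01 R `&` [set x | (l + K)%:E < `|g x|]) <= @leb R ((@U01 R `&` [set x | l%:E < `|h x|]) `|` N).
  apply: leb_mono.
  move=> x [Ux gx]; have [Px|nPx] := pselect (U01 x -> `|g x| <= K%:E + `|h x|).
    left; split => //=.
    have := Px Ux => hh.
    have : (l + K)%:E < K%:E + `|h x| by exact: lt_le_trans hh.
    by rewrite EFinD addeC lteD2lE.
  right; exact: sub.
apply: (le_trans H1); apply: le_trans (lebU2 _ _) _; by rewrite N0 adde0.
Qed.

Lemma erearr_le_ae g h (K : R) t : (0 <= K)%R ->
  {ae @leb R, forall x, U01 x -> `|g x| <= K%:E + `|h x|} ->
  erearr g t <= K%:E + erearr h t.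
Proof. by move=> K0 H; apply: erearr_le_dist => // l _; exact: dist_ae. Qed.

Local Close Scope ereal_scope.
Implicit Types (f : R -> R) (I : R -> R).

Lemma U01P (t : R) : @U01 R t <-> 0 < t /\ t < 1.
Proof. by rewrite /U01 /= in_itv /=; split => [/andP[]|[-> ->]]. Qed.

Lemma I_pos {I t} : incr_bij01 I -> @U01 R t -> 0 < I t /\ I t < 1.
Proof. by move=> [H _] /H /U01P. Qed.


Lemma mU01 : measurable (@U01 R).
Proof. exact: measurable_itv. Qed.

Lemma meas_gt (g : R -> R) (l : R) : measurable_fun (@U01 R) g ->
  measurable (@U01 R `&` [set x | (l%:E < `|(g x)%:E|)%E]).
Proof.
move=> mg.
have mh : measurable_fun (@U01 R) (fun x => `|g x|).
  by apply: measurableT_comp => //; exact: normr_measurable.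
have := mh mU01 _ (measurable_itv `]l, +oo[).
congr measurable; apply/seteqP; split => x /= [Ux h]; split => //.
  by move: h; rewrite in_itv /= andbT ?abse_EFin lte_fin.
by move: h; rewrite in_itv /= andbT ?abse_EFin lte_fin.
Qed.

Lemma rearr_mI I (g : R -> R) {t} : @U01 R t -> ((I t)%:E * rearr g t <= mI_norm I g)%E.
Proof. by move=> Ut; apply: ereal_sup_ubound; exists t. Qed.

Lemma rearr_fin {I} {g : R -> R} {t} : incr_bij01 I -> in_mI I g -> @U01 R t ->
  rearr g t \is a fin_num.
Proof.
move=> HI [_ gfin] Ut; have [It0 _] := I_pos HI Ut.
rewrite ge0_fin_numE ?erearr_ge0//.
have := le_lt_trans (rearr_mI I g Ut) gfin.
case E: (rearr g t) => [r| |] //; first by move=> _; rewrite ltry.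
by rewrite gt0_muley ?lte_fin.
Qed.

Lemma SI_facts {I f t} : incr_bij01 I -> in_mI I f -> @U01 R t ->
  let M := ereal_sup [set ((I s)%:E * rearr f s)%E | s in @Ioc0 R t] in
  [/\ (0 <= M)%E, (M <= mI_norm I f)%E, M \is a fin_num,
      ((I t)%:E * rearr f t <= M)%E & SI I f t = (((I t)^-1)%:E * M)%E].
Proof.
move=> HI fI Ut M.
have [It0 It1] := I_pos HI Ut.
have [t0 t1] := (U01P t).1 Ut.
have h1 : ((I t)%:E * rearr f t <= M)%E.
  by apply: ereal_sup_ubound; exists t => //; rewrite /Ioc0 /= in_itv /= t0 lexx.
have h0 : (0 <= M)%E.
  by apply: le_trans h1; apply: mule_ge0; [rewrite lee_fin ltW|exact: erearr_ge0].
have h2 : (M <= mI_norm I f)%E.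
  apply: ereal_sup_le => _ [s Hs <-]; exists s => //.
  move: Hs; rewrite /Ioc0 /= in_itv /= => /andP[s0 st].
  by apply/U01P; split => //; exact: le_lt_trans st t1.
split => //.
by rewrite ge0_fin_numE//; exact: le_lt_trans h2 fI.2.
Qed.

Lemma rearr_le_SI {I f t} : incr_bij01 I -> in_mI I f -> @U01 R t ->
  (rearr f t <= SI I f t)%E.
Proof.
move=> HI fI Ut; have [It0 _] := I_pos HI Ut.
have [_ _ _ h ->] := SI_facts HI fI Ut.
by rewrite lee_pdivlMl.
Qed.

Lemma SI_fin {I f t} : incr_bij01 I -> in_mI I f -> @U01 R t ->
  SI I f t \is a fin_num.
Proof.
move=> HI fI Ut.
have [_ _ Mf _ ->] := SI_facts HI fI Ut.
by rewrite fin_numM.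
Qed.

Lemma SI_ge0 {I f t} : incr_bij01 I -> in_mI I f -> @U01 R t -> (0 <= SI I f t)%E.
Proof.
move=> HI fI Ut; have [It0 _] := I_pos HI Ut.
have [M0 _ _ _ ->] := SI_facts HI fI Ut.
by apply: mule_ge0 => //; rewrite lee_fin invr_ge0 ltW.
Qed.

Lemma Linf_ae {g : R -> R} {a} : measurable_fun (@U01 R) g -> (Linf_norm g < a%:E)%E ->
  exists l, [/\ 0 <= l, l < a & {ae @leb R, forall x, @U01 R x -> `|g x| <= l}].
Proof.
move=> mg; rewrite /Linf_norm /rearr /erearr => /ereal_inf_lt[_ [l [l0 hl] <-]].
rewrite lte_fin => la; exists l; split => //.
exists (@U01 R `&` [set x | (l%:E < `|(g x)%:E|)%E]); split.
- exact: meas_gt.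
- by apply/eqP; rewrite eq_le leb_ge0 andbT.
- move=> x /= Hx.
  have Ux : @U01 R x by apply: contra_notP Hx => nU Ux; exfalso; exact: nU.
  split => //; rewrite /= ?abse_EFin lte_fin ltNge; apply/negP => h; apply: Hx => _; exact: h.
Qed.

Lemma part1_gen {I} {S : (R -> R) -> (R -> R)} :
  incr_bij01 I -> sublinear_on_mI I S -> bounded_Linf S -> bounded_mI I S ->
  exists C : R, 0 < C /\ forall f, in_mI I f ->
    forall t, @U01 R t -> (rearr (S f) t <= C%:E * SI I f t)%E.
Proof.
move=> HI [mS [subD subZ]] [C1 [C10 HL]] [C2 [C20 HM]].
exists (C1 + C2); split; first exact: addr_gt0.
move=> f fI t Ut.
have [It0 It1] := I_pos HI Ut.
have [t0 t1] := (U01P t).1 Ut.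
have [M0 MmI Mfin ItM SIE] := SI_facts HI fI Ut.
set M := ereal_sup _ in M0 MmI Mfin ItM SIE.
have SIfin := SI_fin HI fI Ut.
have rffin := rearr_fin HI fI Ut.
have rfSI := rearr_le_SI HI fI Ut.
pose sI := fine (SI I f t).
pose rf := fine (rearr f t).
have rfsI : rf <= sI by rewrite -lee_fin /rf /sI !fineK.
rewrite -(fineK SIfin) -/sI -EFinM.
apply/lee_addgt0Pr => e e0.
have d0 : 0 < e / (2 * C1) by apply: divr_gt0 => //; apply: mulr_gt0.
have : (rearr f t < (rf + e / (2 * C1))%:E)%E.
  by rewrite /rf -[X in (X < _)%E](fineK rffin) lte_fin ltrDl.
rewrite /rearr /erearr => /ereal_inf_lt[_ [c [c0 cdist] <-]].
rewrite lte_fin => clt.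
pose f1 := fun x => Num.max (- c) (Num.min (f x) c).
pose f2 := fun x => f x - f1 x.
have mf : measurable_fun (@U01 R) f := fI.1.
have mf1 : measurable_fun (@U01 R) f1.
  apply: (@measurable_realfun.measurable_maxr _ _ _ _ (cst (- c)) (f \min cst c)).
    exact: measurable_cst.
  by apply: measurable_realfun.measurable_minr => //; exact: measurable_cst.
have mf2 : measurable_fun (@U01 R) f2 by exact: measurable_realfun.measurable_funB.
have f1b x : `|f1 x| <= c by have [_ _ h] := @clamp_facts R (f x) c c0.
have f2b x : `|f2 x| <= `|f x| by have [h _ _] := @clamp_facts R (f x) c c0.
have f2z x : `|f x| <= c -> f2 x = 0 by have [_ h _] := @clamp_facts R (f x) c c0.
have rf1 s : (0 <= s) -> (rearr f1 s <= c%:E)%E.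
  move=> s0; apply: ereal_inf_lbound; exists c => //; split => //.
  rewrite /edistrib; apply: (@le_trans _ _ (@leb R set0)).
    apply: leb_mono => x [_ /=]; rewrite ?abse_EFin lte_fin => h.
    by have := lt_le_trans h (f1b x); rewrite ltxx.
  by rewrite /leb measure0 lee_fin.
have Lf1 : in_Linf f1.
  split => //; apply: (le_lt_trans (rf1 0 (lexx _))); exact: ltry.
have f1I : in_mI I f1.
  split => //; apply: (@le_lt_trans _ _ c%:E); last exact: ltry.
  apply: ge_ereal_sup => _ [s Us <-].
  have [Is0 Is1] := I_pos HI Us.
  have [s0 _] := (U01P s).1 Us.
  apply: le_trans (lee_wpmul2l _ (rf1 s (ltW s0))) _; first by rewrite lee_fin ltW.
  by rewrite -EFinM lee_fin ler_piMl // ltW.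
have distf2 : (edistrib (EFin \o f2) 0 <= t%:E)%E.
  apply: le_trans cdist; apply: leb_mono => x [Ux /=]; rewrite ?abse_EFin !lte_fin => h.
  split => //=; rewrite ltNge; apply/negP => hc.
  by move: h; rewrite (f2z x hc) normr0 ltxx.
have f2f s : (rearr f2 s <= rearr f s)%E.
  rewrite -[X in (_ <= X)%E]add0e; apply: erearr_le_ae => //.
  by apply: aeW => x _ /=; rewrite add0e lee_fin.
have f2M : (mI_norm I f2 <= M)%E.
  apply: ge_ereal_sup => _ [s Us <-].
  have [Is0 Is1] := I_pos HI Us.
  have [s0 s1] := (U01P s).1 Us.
  have [st|ts] := leP s t.
    apply: le_trans (lee_wpmul2l _ (f2f s)) _; first by rewrite lee_fin ltW.
    by apply: ereal_sup_ubound; exists s => //; rewrite /Ioc0 /= in_itv /= s0 st.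
  have : (rearr f2 s <= 0%:E)%E.
    apply: ereal_inf_lbound; exists 0 => //; split => //.
    by apply: le_trans distf2 _; rewrite lee_fin ltW.
  move=> h; apply: le_trans M0.
  by rewrite -(mule0 (I s)%:E); apply: lee_wpmul2l => //; rewrite lee_fin ltW.
have f2I : in_mI I f2.
  by split => //; apply: le_lt_trans f2M (le_lt_trans MmI fI.2).
have [[mSf1 _] Sf1b] := HL f1 Lf1.
have LSf1 : (Linf_norm (S f1) < (C1 * c + e / 2)%:E)%E.
  apply: le_lt_trans Sf1b _.
  apply: (@le_lt_trans _ _ (C1 * c)%:E).
    by rewrite EFinM; apply: lee_wpmul2l; [rewrite lee_fin ltW|exact: rf1].
  by rewrite lte_fin ltrDl divr_gt0.
have [l [l0 llt Hl]] := Linf_ae mSf1 LSf1.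
have [[mSf2 _] Sf2b] := HM f2 f2I.
have Hsub := subD f1 f2 f1I f2I.
have ff : (fun y => f1 y + f2 y) = f by apply/funext => y; rewrite /f2 addrC subrK.
rewrite ff in Hsub.
have Hae : {ae @lebesgue_measure R, forall x, @U01 R x ->
    (`|(EFin \o S f) x| <= l%:E + `|(EFin \o S f2) x|)%E}.
  apply: (filterS2 (ae_filter_ringOfSetsType (@lebesgue_measure R)) _ Hsub Hl) => x h1 h2 Ux.
  rewrite /= ?abse_EFin -EFinD lee_fin.
  by apply: le_trans (h1 Ux) _; rewrite lerD2r; exact: h2 Ux.
have step1 := erearr_le_ae _ _ _ t l0 Hae.
have step2 : (rearr (S f2) t <= (C2 * sI)%:E)%E.
  rewrite EFinM /sI (fineK SIfin) SIE muleCA lee_pdivlMl //.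
  apply: le_trans (rearr_mI I (S f2) Ut) _.
  apply: le_trans Sf2b _.
  by apply: lee_wpmul2l => //; rewrite lee_fin ltW.
apply: (le_trans step1).
apply: le_trans (leeD2l _ step2) _.
rewrite -!EFinD lee_fin.
have E1 : C1 * (e / (2 * C1)) = e / 2 by field; apply: lt0r_neq0.
have h1 : C1 * c <= C1 * rf + e / 2.
  by rewrite -E1 -mulrDr; apply: ler_wpM2l; [exact: ltW|exact: ltW].
have h2 : C1 * rf <= C1 * sI by apply: ler_wpM2l => //; exact: ltW.
lra.
Qed.

Lemma noninc_measurable (D : set R) (h : R -> R) : measurable D -> is_interval D ->
  (forall x y, D x -> D y -> x <= y -> h y <= h x) -> measurable_fun D h.
Proof.
move=> mD iD hD.
apply: (measurability (@measurable_realfun.RGenCInfty.G R)) => [|/= _ [_] [r] -> <-].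
  exact: measurable_realfun.RGenCInfty.measurableE.
apply: measurable_realfun.is_interval_measurable => x y [Dx hx] [Dy hy] z /andP[xz zy].
have Dz : D z by apply: (iD x y) => //; rewrite xz zy.
split => //; move: hy; rewrite /= !in_itv /= !andbT => hy.
exact: le_trans hy (hD _ _ Dz Dy zy).
Qed.

Lemma erearr_noninc (g : R -> \bar R) {s u} : s <= u -> (erearr g u <= erearr g s)%E.
Proof.
move=> su; apply: le_ereal_inf_tmp => _ [l [l0 hl] <-].
apply: ereal_inf_lbound; exists l => //; split => //.
by apply: le_trans hl _; rewrite lee_fin.
Qed.

Lemma Ioo0_interval t : is_interval (@Ioo0 R t).
Proof.
move=> x y; rewrite /Ioo0 /= !in_itv /= => /andP[x0 _] /andP[_ yt] z /andP[xz zy].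
by rewrite /= in_itv /= (lt_le_trans x0 xz) (le_lt_trans zy yt).
Qed.

Lemma mIoo0 t : measurable (@Ioo0 R t).
Proof. exact: measurable_itv. Qed.

Lemma erearr_measurable (g : R -> \bar R) t :
  (forall s, @Ioo0 R t s -> erearr g s \is a fin_num) ->
  measurable_fun (@Ioo0 R t) (erearr g).
Proof.
move=> hfin.
have mh : measurable_fun (@Ioo0 R t) (EFin \o (fun s => fine (erearr g s))).
  apply/measurable_EFinP; apply: noninc_measurable.
  - exact: mIoo0.
  - exact: Ioo0_interval.
  - move=> x y Dx Dy xy; apply: fine_le; rewrite ?inE; try exact: hfin.
    exact: erearr_noninc.
apply: (eq_measurable_fun _ _ mh).
by move=> s; rewrite inE => Ds /=; rewrite fineK // hfin.
Qed.

Lemma invI_measurable {I t} : incr_bij01 I -> t <= 1 ->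
  measurable_fun (@Ioo0 R t) (fun s => ((I s)^-1)%:E).
Proof.
move=> HI t1; apply/measurable_EFinP; apply: noninc_measurable.
- exact: mIoo0.
- exact: Ioo0_interval.
- move=> x y; rewrite /Ioo0 /= !in_itv /= => /andP[x0 xt] /andP[y0 yt] xy.
  have Ux : @U01 R x by apply/U01P; split => //; exact: lt_le_trans t1.
  have Uy : @U01 R y by apply/U01P; split => //; exact: lt_le_trans t1.
  have [Ix0 _] := I_pos HI Ux; have [Iy0 _] := I_pos HI Uy.
  rewrite lef_pV2 ?posrE //.
  have [->|xy'] := eqVneq x y; first exact: lexx.
  by apply: ltW; apply: HI.2.1 => //; rewrite lt_neqAle xy' xy.
Qed.

Lemma I_le {I u r} : incr_bij01 I -> @U01 R u -> @U01 R r -> u <= r -> I u <= I r.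
Proof.
move=> HI Uu Ur ur; have [->|ur'] := eqVneq u r; first exact: lexx.
by apply: ltW; apply: HI.2.1 => //; rewrite lt_neqAle ur' ur.
Qed.

Lemma Ioo0_U01 {t s} : t <= 1 -> @Ioo0 R t s -> @U01 R s.
Proof.
move=> t1; rewrite /Ioo0 /= in_itv /= => /andP[s0 st].
by apply/U01P; split => //; exact: lt_le_trans t1.
Qed.

Lemma leb_Ioo0 {t} : 0 <= t -> @leb R (@Ioo0 R t) = t%:E.
Proof.
move=> t0; rewrite /leb /Ioo0 lebesgue_measure_itv /=.
rewrite le_eqVlt in t0; case/orP: t0 => [/eqP <-|t0].
  by rewrite ltxx.
by rewrite lte_fin t0 sube0.
Qed.

Lemma M_mono I f {s t} : s <= t ->
  (ereal_sup [set ((I u)%:E * rearr f u)%E | u in @Ioc0 R s] <=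
   ereal_sup [set ((I u)%:E * rearr f u)%E | u in @Ioc0 R t])%E.
Proof.
move=> st; apply: ereal_sup_le => _ [u Hu <-]; exists u => //.
move: Hu; rewrite /Ioc0 /= !in_itv /= => /andP[u0 us].
by rewrite u0 (le_trans us st).
Qed.

Lemma part2a {I} {S : (R -> R) -> (R -> R)} {C : R} : incr_bij01 I -> 0 < C ->
  (forall f, in_mI I f -> forall t, @U01 R t -> (rearr (S f) t <= C%:E * SI I f t)%E) ->
  (forall f, in_mI I f -> in_mI I (S f)) ->
  forall C3 : R, 0 < C3 ->
  (forall t, @U01 R t -> (\int[@leb R]_(s in @Ioo0 R t) ((I s)^-1)%:E <= (C3 * t / I t)%:E)%E) ->
  forall f, in_mI I f -> forall t, @U01 R t ->
  (rearr2 (S f) t <= (C * C3)%:E * SI I f t)%E.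
Proof.
move=> HI C0 HS HmI C3 C30 Hint f fI t Ut.
have [It0 It1] := I_pos HI Ut.
have [t0 t1] := (U01P t).1 Ut.
have [M0 MmI Mfin ItM SIE] := SI_facts HI fI Ut.
set M := ereal_sup _ in M0 MmI Mfin ItM SIE.
pose m := fine M.
have Mm : M = m%:E by rewrite /m fineK.
have m0 : 0 <= m by rewrite -lee_fin -Mm.
have pw : forall s, @Ioo0 R t s ->
    (erearr (EFin \o S f) s <= (C * m)%:E * ((I s)^-1)%:E)%E.
  move=> s Ds; have Us := Ioo0_U01 (ltW t1) Ds.
  have [Is0 _] := I_pos HI Us.
  have [_ _ _ _ SIs] := SI_facts HI fI Us.
  apply: le_trans (HS f fI s Us) _.
  rewrite SIs EFinM -muleA; apply: lee_wpmul2l; first by rewrite lee_fin ltW.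
  rewrite muleC; apply: lee_wpmul2r; first by rewrite lee_fin invr_ge0 ltW.
  rewrite -Mm; apply: M_mono.
  by move: Ds; rewrite /Ioo0 /= in_itv /= => /andP[_ /ltW].
have mI' := invI_measurable HI (ltW t1).
have Hint1 : (\int[@leb R]_(s in @Ioo0 R t) erearr (EFin \o S f) s <=
    (C * m * (C3 * t / I t))%:E)%E.
  apply: le_trans.
    apply: (@ge0_le_integral _ _ _ (@lebesgue_measure R) _ (mIoo0 t) _
      (fun s => ((C * m)%:E * ((I s)^-1)%:E)%E)).
    - by move=> s _; exact: erearr_ge0.
    - apply: erearr_measurable => s Ds.
      exact: rearr_fin HI (HmI f fI) (Ioo0_U01 (ltW t1) Ds).
    - exact: measurable_funeM.
    - exact: pw.
  rewrite /leb (ge0_integralZl (@lebesgue_measure R) (mIoo0 t) mI'); last 2 first.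
    - by move=> s Ds; have [Is0 _] := I_pos HI (Ioo0_U01 (ltW t1) Ds); rewrite lee_fin invr_ge0 ltW.
    - by rewrite lee_fin mulr_ge0 // ltW.
  rewrite (EFinM (C * m)); apply: lee_wpmul2l; first by rewrite lee_fin mulr_ge0 // ltW.
  exact: Hint.
rewrite /rearr2 /erearr2.
apply: le_trans (lee_wpmul2l _ Hint1) _; first by rewrite lee_fin invr_ge0 ltW.
rewrite SIE Mm -!EFinM lee_fin le_eqVlt; apply/orP; left; apply/eqP.
by field; apply/andP; split; apply: lt0r_neq0.
Qed.

Lemma erearr_invI I (m : R) s : incr_bij01 I -> 0 <= m -> @U01 R s ->
  (erearr (fun r => ((I r)^-1 * m)%:E) s <= ((I s)^-1 * m)%:E)%E.
Proof.
move=> HI m0 Us; have [Is0 _] := I_pos HI Us.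
have [s0 s1] := (U01P s).1 Us.
apply: ereal_inf_lbound; exists ((I s)^-1 * m) => //; split.
  by rewrite mulr_ge0 // invr_ge0 ltW.
rewrite /edistrib -(leb_Ioo0 (ltW s0)); apply: leb_mono => x [Ux /=].
rewrite ?abse_EFin lte_fin => h.
have [Ix0 _] := I_pos HI Ux.
have [x0 _] := (U01P x).1 Ux.
rewrite /Ioo0 /= in_itv /= x0 /=; rewrite ltNge; apply/negP => sx.
move: h; rewrite ger0_norm; last by rewrite mulr_ge0 // invr_ge0 ltW.
apply/negP; rewrite -leNgt; apply: ler_wpM2r => //.
by rewrite lef_pV2 ?posrE //; exact: I_le.
Qed.

Lemma part2b {I} : incr_bij01 I ->
  forall C3 : R, 0 < C3 ->
  (forall t, @U01 R t -> (\int[@leb R]_(s in @Ioo0 R t) ((I s)^-1)%:E <= (C3 * t / I t)%:E)%E) ->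
  forall f, in_mI I f -> forall t, @U01 R t ->
  (erearr2 (SI I f) t <= (2 + C3)%:E * SI I f t)%E.
Proof.
move=> HI C3 C30 Hint f fI t Ut.
have [It0 It1] := I_pos HI Ut.
have [t0 t1] := (U01P t).1 Ut.
have [M0 MmI Mfin ItM SIE] := SI_facts HI fI Ut.
set M := ereal_sup _ in M0 MmI Mfin ItM SIE.
pose m := fine M.
have Mm : M = m%:E by rewrite /m fineK.
have m0 : 0 <= m by rewrite -lee_fin -Mm.
pose sI := (I t)^-1 * m.
have SIt : SI I f t = sI%:E by rewrite SIE Mm -EFinM.
have sI0 : 0 <= sI by rewrite mulr_ge0 // invr_ge0 ltW.
have rffin := rearr_fin HI fI Ut.
pose rf := fine (rearr f t).
have rfE : rearr f t = rf%:E by rewrite /rf fineK.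
have rfsI : rf <= sI by rewrite -lee_fin -rfE -SIt; exact: rearr_le_SI.
have rf0 : 0 <= rf by rewrite -lee_fin -rfE; exact: erearr_ge0.
have pw : forall r, @U01 R r ->
    (SI I f r <= (2 * sI + (I r)^-1 * m)%:E)%E.
  move=> r Ur; have [Ir0 Ir1] := I_pos HI Ur.
  have [_ _ _ _ SIr] := SI_facts HI fI Ur.
  rewrite SIr.
  have [rt|tr] := leP r t.
    apply: le_trans (lee_wpmul2l _ (M_mono I f rt)) _.
      by rewrite lee_fin invr_ge0 ltW.
    by rewrite -/M Mm -EFinM lee_fin lerDr mulr_ge0.
  have Mr : (ereal_sup [set ((I u)%:E * rearr f u)%E | u in @Ioc0 R r] <=
      (m + I r * rf)%:E)%E.
    apply: ge_ereal_sup => _ [u Hu <-].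
    have Uu : @U01 R u.
      move: Hu; rewrite /Ioc0 /= in_itv /= => /andP[u0 ur].
      by apply/U01P; split => //; apply: le_lt_trans ur _; have [] := (U01P r).1 Ur.
    have [Iu0 _] := I_pos HI Uu.
    have [ut|tu] := leP u t.
      apply: le_trans (_ : (M <= _)%E).
        apply: ereal_sup_ubound; exists u => //.
        move: Hu; rewrite /Ioc0 /= !in_itv /= => /andP[u0 _].
        by rewrite u0 ut.
      by rewrite Mm lee_fin lerDl mulr_ge0 // ltW.
    apply: le_trans (lee_wpmul2l _ (erearr_noninc (EFin \o f) (ltW tu))) _.
      by rewrite lee_fin ltW.
    rewrite -/(rearr f t) rfE -EFinM lee_fin.
    apply: le_trans (_ : I r * rf <= _); last by rewrite lerDr.
    apply: ler_wpM2r => //; apply: (I_le HI Uu Ur).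
    by move: Hu; rewrite /Ioc0 /= in_itv /= => /andP[_].
  apply: le_trans (lee_wpmul2l _ Mr) _; first by rewrite lee_fin invr_ge0 ltW.
  rewrite -EFinM lee_fin mulrDr mulrA mulVf ?lt0r_neq0 // mul1r.
  lra.
have bnd : forall s, @Ioo0 R t s ->
    (erearr (SI I f) s <= (2 * sI)%:E + ((I s)^-1 * m)%:E)%E.
  move=> s Ds; have Us := Ioo0_U01 (ltW t1) Ds.
  apply: le_trans (erearr_le_ae _ (fun r => ((I r)^-1 * m)%:E) (2 * sI) s _ _) _.
  - by rewrite mulr_ge0.
  - apply: aeW => x Ux.
    rewrite gee0_abs; last exact: SI_ge0 HI fI Ux.
    have [Ix0 _] := I_pos HI Ux.
    rewrite abse_EFin ger0_norm; last by rewrite mulr_ge0 // invr_ge0 ltW.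
    by rewrite -EFinD; exact: pw.
  - by rewrite leeD2l //; exact: erearr_invI.
have mI' := invI_measurable HI (ltW t1).
have Hint1 : (\int[@leb R]_(s in @Ioo0 R t) erearr (SI I f) s <=
    (2 * sI * t + m * (C3 * t / I t))%:E)%E.
  apply: le_trans.
    apply: (@ge0_le_integral _ _ _ (@lebesgue_measure R) _ (mIoo0 t) _
      (fun s => ((2 * sI)%:E + m%:E * ((I s)^-1)%:E)%E)).
    - by move=> s _; exact: erearr_ge0.
    - apply: erearr_measurable => s Ds.
      rewrite ge0_fin_numE ?erearr_ge0 //.
      by apply: le_lt_trans (bnd s Ds) _; rewrite -EFinD ltry.
    - apply: emeasurable_funD; first exact: measurable_cst.
      exact: measurable_funeM.
    - by move=> s Ds; rewrite -EFinM (mulrC m); exact: bnd.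
  rewrite (ge0_integralD (@lebesgue_measure R) (mIoo0 t)); last 4 first.
    - by move=> s _; rewrite lee_fin mulr_ge0.
    - exact: measurable_cst.
    - move=> s Ds; have [Is0 _] := I_pos HI (Ioo0_U01 (ltW t1) Ds).
      by rewrite -EFinM lee_fin mulr_ge0 // invr_ge0 ltW.
    - exact: measurable_funeM.
  rewrite (ge0_integralZl (@lebesgue_measure R) (mIoo0 t) mI'); last 2 first.
    - by move=> s Ds; have [Is0 _] := I_pos HI (Ioo0_U01 (ltW t1) Ds); rewrite lee_fin invr_ge0 ltW.
    - by rewrite lee_fin.
  rewrite (integral_cst (@lebesgue_measure R) (mIoo0 t)).
  have Lt' : (@leb R (@Ioo0 R t) <= t%:E)%E by rewrite (leb_Ioo0 (ltW t0)).
  rewrite EFinD; apply: leeD.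
    rewrite [X in (_ <= X)%E]EFinM; apply: lee_wpmul2l; first by rewrite lee_fin mulr_ge0.
    exact: Lt'.
  rewrite [X in (_ <= X)%E]EFinM; apply: lee_wpmul2l; first by rewrite lee_fin.
  exact: Hint.
rewrite /erearr2.
apply: le_trans (lee_wpmul2l _ Hint1) _; first by rewrite lee_fin invr_ge0 ltW.
rewrite SIt -!EFinM lee_fin le_eqVlt; apply/orP; left; apply/eqP.
by rewrite /sI; field; apply/andP; split; apply: lt0r_neq0.
Qed.

Lemma U01_interval : is_interval (@U01 R).
Proof.
move=> x y /U01P[x0 _] /U01P[_ y1] z /andP[xz zy].
by apply/U01P; split; [exact: lt_le_trans xz|exact: le_lt_trans y1].
Qed.

Lemma rearrF_measurable {g : R -> R} :
  (forall s, @U01 R s -> rearr g s \is a fin_num) ->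
  measurable_fun (@U01 R) (fun s => fine (rearr g s)).
Proof.
move=> hfin; apply: noninc_measurable.
- exact: mU01.
- exact: U01_interval.
- by move=> x y Ux Uy xy; apply: fine_le; rewrite ?inE; [exact: hfin|exact: hfin|exact: erearr_noninc].
Qed.

Lemma right_cont (g : R -> R) (l s : R) : measurable_fun (@U01 R) g ->
  (forall e, 0 < e -> (edistrib (EFin \o g) (l + e) <= s%:E)%E) ->
  (edistrib (EFin \o g) l <= s%:E)%E.
Proof.
move=> mg H.
pose F n := @U01 R `&` [set x | ((l + (n.+1%:R)^-1)%:E < `|(g x)%:E|)%E].
have mF n : measurable (F n) by exact: meas_gt.
have U : \bigcup_n F n = @U01 R `&` [set x | (l%:E < `|(g x)%:E|)%E].
  apply/seteqP; split => x.
    move=> [n _ [Ux h]]; split => //; apply: le_lt_trans h.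
    by rewrite lee_fin lerDl invr_ge0.
  move=> [Ux] /= h; move: h; rewrite ?abse_EFin lte_fin => h.
  have [k hk] := ltr_add_invr h.
  by exists k => //; split => //=; rewrite ?lte_fin.
have nd : nondecreasing_seq F.
  move=> n m nm; apply/subsetPset => x [Ux h]; split => //; apply: le_lt_trans h.
  rewrite lee_fin lerD2l lef_pV2 ?posrE ?ltr0n // ler_nat.
  by rewrite ltnS.
have mU : measurable (\bigcup_n F n) by rewrite U; exact: meas_gt.
have Hc := @nondecreasing_cvg_mu _ _ _ (@lebesgue_measure R) F mF mU nd.
suff h : (@lebesgue_measure R (\bigcup_n F n) <= s%:E)%E by rewrite U in h; exact: h.
have := cvge_to_le Hc; apply; apply: nearW => n.
exact: (H _ _).
Qed.

Lemma erearr_eq_dist (g h : R -> \bar R) t :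
  (forall l, 0 <= l -> edistrib g l = edistrib h l) -> erearr g t = erearr h t.
Proof.
move=> H; rewrite /erearr; congr ereal_inf; congr image.
by apply/seteqP; split => l [l0 hl]; split => //; rewrite ?H // -?H.
Qed.

Lemma rearr_abs (g : R -> R) t : rearr (fun x => `|g x|) t = rearr g t.
Proof.
apply: erearr_eq_dist => l _; rewrite /edistrib; congr (_ (_ `&` _)).
by apply/seteqP; split => x /=; rewrite ?abse_EFin ?normr_id.
Qed.

Lemma dist_rearr (g : R -> R) l : measurable_fun (@U01 R) g ->
  (forall s, @U01 R s -> rearr g s \is a fin_num) -> 0 <= l ->
  edistrib (EFin \o (fun s => fine (rearr g s))) l = edistrib (EFin \o g) l.
Proof.
move=> mg hfin l0.
pose F := fun s => fine (rearr g s).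
have F0 s : 0 <= F s by apply: fine_ge0; exact: erearr_ge0.
pose mu := edistrib (EFin \o g) l.
have mu0 : (0 <= mu)%E by exact: leb_ge0.
have mu1 : (mu <= 1%:E)%E.
  rewrite -(leb_Ioo0 ler01); apply: leb_mono => x [Ux _]; exact: Ux.
have mufin : mu \is a fin_num by rewrite ge0_fin_numE // (le_lt_trans mu1) ?ltry.
pose a := fine mu.
have muE : mu = a%:E by rewrite /a fineK.
have a0 : 0 <= a by rewrite -lee_fin -muE.
have a1 : a <= 1 by rewrite -lee_fin -muE.
have key s : @U01 R s -> (l < F s) = (s < a).
  move=> Us; have rE : rearr g s = (F s)%:E by rewrite /F fineK // hfin.
  apply/idP/idP => h.
    rewrite ltNge; apply/negP => as_.
    have : (rearr g s <= l%:E)%E.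
      apply: ereal_inf_lbound; exists l => //; split => //.
      by rewrite -/mu muE lee_fin.
    by rewrite rE lee_fin leNgt h.
  rewrite ltNge; apply/negP => Fl.
  have : (mu <= s%:E)%E.
    apply: right_cont => // e e0.
    have : (rearr g s < (l + e)%:E)%E.
      by rewrite rE lte_fin; apply: le_lt_trans Fl _; rewrite ltrDl.
    rewrite /rearr /erearr => /ereal_inf_lt[_ [l' [l'0 hl'] <-]].
    rewrite lte_fin => l'lt.
    apply: le_trans hl'; apply: leb_mono => x [Ux /=] hx; split => //=.
    by apply: lt_trans hx; rewrite lte_fin.
  by rewrite muE lee_fin leNgt h.
rewrite -[edistrib (EFin \o g) l]/mu muE -(leb_Ioo0 a0) /edistrib; congr (leb _).
apply/seteqP; split => x.
  move=> [Ux /=]; rewrite ?abse_EFin lte_fin (ger0_norm (F0 x)) => h.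
  have [x0 _] := (U01P x).1 Ux.
  by rewrite /Ioo0 /= in_itv /= x0 -key.
rewrite /Ioo0 /= in_itv /= => /andP[x0 xa].
have Ux : @U01 R x by apply/U01P; split => //; exact: lt_le_trans a1.
split => //=; rewrite ?abse_EFin lte_fin (ger0_norm (F0 x)).
by rewrite key.
Qed.

Lemma rearr_rearr (g : R -> R) t : measurable_fun (@U01 R) g ->
  (forall s, @U01 R s -> rearr g s \is a fin_num) ->
  rearr (fun s => fine (rearr g s)) t = rearr g t.
Proof.
move=> mg hfin; apply: erearr_eq_dist => l l0; exact: dist_rearr.
Qed.

Lemma lin_sub {I T} : linear_on_mI I T -> sublinear_on_mI I T.
Proof.
move=> [mT HT]; split => //; split.
- move=> f g fI gI; have := HT 1 1 f g fI gI.
  rewrite (_ : (fun y => 1 * f y + 1 * g y) = (fun y => f y + g y)); last first.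
    by apply/funext => y; rewrite !mul1r.
  apply: (@filterS _ _ (ae_filter_ringOfSetsType (@lebesgue_measure R))) => x h Ux.
  by rewrite h // !mul1r; exact: ler_normD.
- move=> a f fI; have := HT a 0 f f fI fI.
  rewrite (_ : (fun y => a * f y + 0 * f y) = (fun y => a * f y)); last first.
    by apply/funext => y; rewrite mul0r addr0.
  apply: (@filterS _ _ (ae_filter_ringOfSetsType (@lebesgue_measure R))) => x h Ux.
  by rewrite h // mul0r addr0 normrM.
Qed.

Lemma indic01_ge0 x : 0 <= (\1_(@U01 R) x : R).
Proof. by rewrite /indic ler0n. Qed.

Lemma part3 I : incr_bij01 I -> forall X : ri_space R,
  (forall f, in_X X f -> in_mI I f) -> SI_bounded_X I X -> Int_Linf_mI I X.
Proof.
move=> HI X XmI [CS [CS0 HSX]]; split; [|split] => //.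
  move=> f [mf fL].
  have Lfin : Linf_norm f \is a fin_num by rewrite ge0_fin_numE // erearr_ge0.
  have Llt : (Linf_norm f < (fine (Linf_norm f) + 1)%:E)%E.
    by rewrite -[X in (X < _)%E](fineK Lfin) lte_fin ltrDl ltr01.
  have [l [l0 _ Hl]] := Linf_ae mf Llt.
  split => //; rewrite /normX.
  have mabs : measurable_fun (@U01 R) (fun x => `|f x|).
    by apply: measurableT_comp => //; exact: normr_measurable.
  have mind : measurable_fun (@U01 R) (\1_(@U01 R) : R -> R).
    exact: measurable_indic mU01.
  have mh : measurable_fun (@U01 R) (fun x => l * \1_(@U01 R) x).
    by apply: (@measurable_funM _ _ _ _ (cst l) (\1_(@U01 R))) => //; exact: measurable_cst.
  apply: (le_lt_trans (@rho_mono _ X (fun x => l * \1_(@U01 R) x) _ mh _ mabs _ _)).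
  - by move=> x _; rewrite mulr_ge0 // indic01_ge0.
  - by move=> x _; exact: normr_ge0.
  - apply: (@filterS _ _ (ae_filter_ringOfSetsType (@lebesgue_measure R)) _ _ _ Hl).
    by move=> x h Ux; rewrite indicE mem_set // mulr1; exact: h.
  rewrite (@rhoZ _ X l (\1_(@U01 R)) l0 mind) => [|x _]; last exact: indic01_ge0.
  have Ifin : rho X (\1_(@U01 R)) \is a fin_num.
    by rewrite ge0_fin_numE ?rho_ge0 // (@rho_indic _ X (@U01 R) mU01).
  by rewrite -(fineK Ifin) -EFinM ltry.
move=> T TL TLinf TmI.
have TS := lin_sub TL.
have [C [C0 HC]] := part1_gen HI TS TLinf TmI.
have [CM [CM0 HM]] := TmI.
exists (C * CS); split; first exact: mulr_gt0.
move=> f fX; have fI := XmI f fX.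
have [TfI _] := HM f fI.
have mTf := TfI.1.
have [[mSI _] SIb] := HSX f fX.
have Ffin : forall s, @U01 R s -> rearr (T f) s \is a fin_num.
  by move=> s Us; exact: rearr_fin HI TfI Us.
have mF := rearrF_measurable Ffin.
have mabsTf : measurable_fun (@U01 R) (fun x => `|T f x|).
  by apply: measurableT_comp => //; exact: normr_measurable.
have mabsSI : measurable_fun (@U01 R) (fun x => `|fine (SI I f x)|).
  by apply: measurableT_comp => //; exact: normr_measurable.
have mCSI : measurable_fun (@U01 R) (fun x => C * `|fine (SI I f x)|).
  by apply: (@measurable_funM _ _ _ _ (cst C)) => //; exact: measurable_cst.
have Eq : normX X (T f) = rho X (fun s => fine (rearr (T f) s)).
  rewrite /normX; apply: rho_ri => //.
  - by move=> x _; apply: fine_ge0; exact: erearr_ge0.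
  - by move=> t; rewrite rearr_abs rearr_rearr.
have Le : (rho X (fun s => fine (rearr (T f) s)) <=
    C%:E * normX X (fun t => fine (SI I f t)))%E.
  rewrite /normX -(@rhoZ _ X C (fun x => `|fine (SI I f x)|)) //; first last.
  all: try (by move=> x _; exact: normr_ge0); try (by exact: ltW).
  apply: rho_mono => //.
  - by move=> x _; rewrite mulr_ge0 // ltW.
  - by move=> x _; apply: fine_ge0; exact: erearr_ge0.
  - apply: aeW => x Ux.
    have SIf := SI_fin HI fI Ux.
    rewrite -lee_fin fineK ?Ffin //.
    apply: le_trans (HC f fI x Ux) _.
    rewrite -(fineK SIf) -EFinM lee_fin; apply: ler_wpM2l; first exact: ltW.
    exact: ler_norm.
have nXf0 : (0 <= normX X f)%E by exact: rho_ge0.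
have nXfin : normX X f \is a fin_num by rewrite ge0_fin_numE //; exact: fX.2.
have bound : (normX X (T f) <= (C * CS)%:E * normX X f)%E.
  rewrite Eq; apply: le_trans Le _.
  rewrite EFinM -muleA; apply: lee_wpmul2l; first by rewrite lee_fin ltW.
  exact: SIb.
split => //; split => //.
apply: le_lt_trans bound _.
by rewrite -(fineK nXfin) -EFinM ltry.
Qed.

Theorem main_thm (I : R -> R) (S : (R -> R) -> (R -> R)) :
  incr_bij01 I -> doubling I ->
  sublinear_on_mI I S -> bounded_Linf S -> bounded_mI I S ->
  (exists C : R, 0 < C /\ forall f, in_mI I f -> nonneg01 f ->
     forall t, @U01 R t -> (rearr (S f) t <= C%:E * SI I f t)%E) /\
  (int_cond I ->
   exists C : R, 0 < C /\ forall f, in_mI I f -> nonneg01 f ->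
     forall t, @U01 R t ->
       (rearr2 (S f) t <= C%:E * SI I f t)%E /\
       (erearr2 (SI I f) t <= C%:E * SI I f t)%E) /\
  (forall X : ri_space R, (forall f, in_X X f -> in_mI I f) ->
     SI_bounded_X I X -> Int_Linf_mI I X).
Proof.
move=> HI _ HS HL HM.
have [C [C0 HC]] := part1_gen HI HS HL HM.
split; first by exists C; split => // f fI _; exact: HC.
split; last exact: part3.
move=> [C3 [C30 Hint]].
have HmI : forall f, in_mI I f -> in_mI I (S f).
  by move=> f fI; case: HM => ? [_ H]; exact: (H f fI).1.
exists (C * C3 + (2 + C3)); split.
  by apply: addr_gt0; [exact: mulr_gt0|exact: addr_gt0].
move=> f fI _ t Ut.
have SI0 := SI_ge0 HI fI Ut.
split.
  apply: le_trans (part2a HI C0 HC HmI C3 C30 Hint f fI t Ut) _.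
  apply: lee_wpmul2r => //; rewrite lee_fin lerDl; exact: addr_ge0 (ltW _) (ltW _).
apply: le_trans (part2b HI C3 C30 Hint f fI t Ut) _.
apply: lee_wpmul2r => //; rewrite lee_fin lerDr; exact: mulr_ge0 (ltW _) (ltW _).
Qed.
End Aux.

Theorem theorem3p9 (R : realType) (I : R -> R) (S : (R -> R) -> (R -> R)) :
  incr_bij01 I -> doubling I ->
  sublinear_on_mI I S -> bounded_Linf S -> bounded_mI I S ->
  (exists C : R, 0 < C /\ forall f, in_mI I f -> nonneg01 f ->
     forall t, U01 t -> (rearr (S f) t <= C%:E * SI I f t)%E) /\
  (int_cond I ->
   exists C : R, 0 < C /\ forall f, in_mI I f -> nonneg01 f ->
     forall t, U01 t ->
       (rearr2 (S f) t <= C%:E * SI I f t)%E /\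
       (erearr2 (SI I f) t <= C%:E * SI I f t)%E) /\
  (forall X : ri_space R, (forall f, in_X X f -> in_mI I f) ->
     SI_bounded_X I X -> Int_Linf_mI I X).
Proof. exact: (@main_thm R I S). Qed.
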